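(* Let $V$ be a complex vector space of dimension $k$. Let $\mu$ and $\nu$ be partitions with at most $k$ parts, with $\nu$ obtained from $\mu$ by adding one cell. Let $\iota\colon S_\nu V^*\to V^*\otimes S_\mu V^*$ be the $GL(V)$-equivariant inclusion. Let $P\colon S_\mu V^*\otimes V^*\to S_\nu V^*$ be the $GL(V)$-equivariant projection. Let $T'\colon S_\mu V^*\otimes S_\nu V^*\to S_\nu V^*\otimes S_\mu V^*$ be the composition of $$\mathrm{id}\otimes\iota\colon S_\mu V^*\otimes S_\nu V^*\to S_\mu V^*\otimes V^*\otimes S_\mu V^*$$ with $$P\otimes \mathrm{id}\colon S_\mu V^*\otimes V^*\otimes S_\mu V^*\to S_\nu V^*\otimes S_\mu V^*.$$ Suppose the isotypic component with highest weight $\pi$ appears with the same multiplicity $M$ in $S_\mu V^*\otimes S_\nu V^*$ and in $S_\mu V^*\otimes V^*\otimes S_\mu V^*$. Then the isotypic component with highest weight $\pi$ appears in the image of $T'$ with multiplicity $M$.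
   Context: $S_\lambda V$ denotes the irreducible polynomial $GL(V)$-module (Schur module) indexed by the partition $\lambda$. By the Pieri rule, $S_\nu V^*$ occurs with multiplicity one in $V^*\otimes S_\mu V^*$, so $\iota$ and $P$ are unique up to scale. The map $T'$ is the Young flattening of the $GL(V)$-invariant tensor in $V^*\otimes S_\mu V^*\otimes S_\nu V$. *)

(* Defs.v *)
(* Concrete model of the GL(V)-modules built from dual(V),
   with V = C^k (standard basis), dual(V) = row vectors (dual basis coordinates),
   and tensor powers (dual V)^{(x) n} realised as row vectors of length k ^ n
   via the Kronecker product (mathcomp-real-closed's mxtens). *)
From HB Require Import structures.
From mathcomp Require Import all_boot all_order all_algebra.
From mathcomp Require Import mxtens.
Set Implicit Arguments. Unset Strict Implicit. Unset Printing Implicit Defensive.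
Import Order.TTheory GRing.Theory Num.Theory.
Local Open Scope ring_scope.

Definition is_partition (l : seq nat) : bool :=
  sorted geq l && all (fun x => 0 < x)%N l.

Definition adds_one_cell (mu nu : seq nat) : Prop :=
  is_partition nu /\ exists i : nat, nu = incr_nth mu i.

(* Action of g in GL(V) on dual(V) (contragredient), on row vectors of dual
   coordinates: phi |-> phi *m g^{-1}; and on (dual V)^{(x) n}. *)
Definition dualrep (F : fieldType) (k n : nat) (g : 'M[F]_k) : 'M[F]_(k ^ n) :=
  (invmx g) ^t n.
Arguments dualrep {F} k n g.

(* A (right, row-vector) representation of GL_k on F^d is given by a map
   rho : 'M_k -> 'M_d; a subspace is the row space of a matrix. *)
Definition invariant (F : fieldType) (k d : nat) (rho : 'M[F]_k -> 'M[F]_d)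
  (r : nat) (U : 'M[F]_(r, d)) : Prop :=
  forall g : 'M[F]_k, g \in unitmx -> (U *m rho g <= U)%MS.

Definition irreducible_sub (F : fieldType) (k d : nat) (rho : 'M[F]_k -> 'M[F]_d)
  (r : nat) (U : 'M[F]_(r, d)) : Prop :=
  [/\ invariant rho U, (0 < \rank U)%N &
      forall W : 'M[F]_d, (W <= U)%MS -> invariant rho W ->
        \rank W = 0%N \/ (W == U)%MS].

Definition hwvec (F : fieldType) (k d : nat) (rho : 'M[F]_k -> 'M[F]_d)
  (pi : 'I_k -> int) (w : 'rV[F]_d) : Prop :=
  (forall t : 'rV[F]_k, (forall i, t 0 i != 0) ->
      w *m rho (diag_mx t) = (\prod_(i < k) (t 0 i) ^ (pi i)) *: w) /\
  (forall u : 'M[F]_k, (forall i j : 'I_k, (j < i)%N -> u i j = 0) ->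
      (forall i, u i i = 1) -> w *m rho u = w).

(* The isotypic component of highest weight pi appears in the invariant
   subspace U with multiplicity M: the space of highest weight vectors of
   weight pi in U has dimension M. *)
Definition hw_mult (F : fieldType) (k d : nat) (rho : 'M[F]_k -> 'M[F]_d)
  (r : nat) (U : 'M[F]_(r, d)) (pi : 'I_k -> int) (M : nat) : Prop :=
  exists B : 'M[F]_(M, d), row_free B /\
    forall w : 'rV[F]_d, (w <= B)%MS <-> ((w <= U)%MS /\ hwvec rho pi w).

(* Highest weight of S_lambda dual(V) = (S_lambda V)^* : (-l_k, ..., -l_1). *)
Definition dualwt (k : nat) (l : seq nat) : 'I_k -> int :=
  fun j => - ((nth 0%N l (k - 1 - j))%:Z).
Arguments dualwt : clear implicits.

(* S is (a realisation inside (dual V)^{(x)|lambda|} of) the Schur module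
   S_lambda dual(V): the irreducible GL(V)-module of highest weight dualwt l. *)
Definition is_Schur_dual (F : fieldType) (k : nat) (l : seq nat)
  (S : 'M[F]_(k ^ sumn l)) : Prop :=
  irreducible_sub (dualrep k (sumn l)) S /\
  exists w : 'rV[F]_(k ^ sumn l),
    [/\ w != 0, (w <= S)%MS & hwvec (dualrep k (sumn l)) (dualwt k l) w].

Definition equivariant_on (F : fieldType) (k d1 d2 : nat)
  (rho1 : 'M[F]_k -> 'M[F]_d1) (rho2 : 'M[F]_k -> 'M[F]_d2)
  (r : nat) (U : 'M[F]_(r, d1)) (f : 'M[F]_(d1, d2)) : Prop :=
  forall g : 'M[F]_k, g \in unitmx -> U *m (rho1 g *m f - f *m rho2 g) = 0.

(* Main.v *)
Require Import Defs.
From HB Require Import structures.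
From mathcomp Require Import all_boot all_order all_algebra.
From mathcomp Require Import mxtens complex zify.
From mathcomp Require Import reals.
Import Order.TTheory GRing.Theory Num.Theory.
Local Open Scope ring_scope.

Section Gen.
Variable F : fieldType.

Lemma equivE {k d1 d2} {rho1 : 'M[F]_k -> 'M_d1} {rho2 : 'M[F]_k -> 'M_d2} {r}
  {U : 'M_(r, d1)} {f} : equivariant_on rho1 rho2 U f ->
  forall g, g \in unitmx -> forall p (X : 'M_(p, d1)), (X <= U)%MS ->
  X *m rho1 g *m f = X *m f *m rho2 g.
Proof.
move=> h g gu p X /submxP [D ->]; have := h g gu.
rewrite mulmxBr => /eqP; rewrite subr_eq0 => /eqP e.
by rewrite -!mulmxA e.
Qed.

Lemma diag_unit {k} {t : 'rV[F]_k} : (forall i, t 0 i != 0) -> diag_mx t \in unitmx.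
Proof.
move=> ht; rewrite unitmxE det_diag unitfE; apply/prodf_neq0 => i _; exact: ht.
Qed.

Lemma unip_unit {k} {u : 'M[F]_k} : (forall i j : 'I_k, (j < i)%N -> u i j = 0) ->
  (forall i, u i i = 1) -> u \in unitmx.
Proof.
move=> h1 h2; rewrite unitmxE -det_tr det_trig.
  by rewrite (eq_bigr (fun _ => 1)) ?prodr_const ?expr1n ?unitr1 // => i _; rewrite mxE h2.
by apply/is_trig_mxP => i j hij; rewrite mxE h1.
Qed.

Lemma hw_map k d d' (rho : 'M[F]_k -> 'M_d) (rho' : 'M[F]_k -> 'M_d') r (U : 'M_(r,d))
  (Q : 'M_(d,d')) pi (x : 'rV_d) :
  (x <= U)%MS -> hwvec rho pi x -> equivariant_on rho rho' U Q -> hwvec rho' pi (x *m Q).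
Proof.
move=> xU [h1 h2] hQ; split.
  move=> t ht; rewrite -(equivE hQ _ (diag_unit ht) _ _ xU) h1 //.
  by rewrite -scalemxAl.
move=> u hu1 hu2; by rewrite -(equivE hQ _ (unip_unit hu1 hu2) _ _ xU) h2.
Qed.

End Gen.
Arguments equivE {F k d1 d2 rho1 rho2 r U f}.
Arguments diag_unit {F k t}.
Arguments unip_unit {F k u}.
Section Tens.
Variable R : comPzRingType.

Lemma tensA a b c d e f (X : 'M[R]_(a,b)) (Y : 'M[R]_(c,d)) (Z : 'M[R]_(e,f)) :
  (X *t Y) *t Z = castmx (mulnA a c e, mulnA b d f) (X *t (Y *t Z)).
Proof.
apply/matrixP => i j.
case: (mxtens_indexP i) => i12 i3; case: (mxtens_indexP i12) => i1 i2.
case: (mxtens_indexP j) => j12 j3; case: (mxtens_indexP j12) => j1 j2.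
rewrite castmxE !tensmxE.
have -> : cast_ord (esym (mulnA a c e)) (mxtens_index (mxtens_index (i1, i2), i3))
  = mxtens_index (i1, mxtens_index (i2, i3)).
  by apply: val_inj => /=; rewrite mulnDl -mulnA addnA.
have -> : cast_ord (esym (mulnA b d f)) (mxtens_index (mxtens_index (j1, j2), j3))
  = mxtens_index (j1, mxtens_index (j2, j3)).
  by apply: val_inj => /=; rewrite mulnDl -mulnA addnA.
by rewrite !tensmxE mulrA.
Qed.

Lemma castmx_mulr m m' n p (e : m = m') (A : 'M[R]_(m,n)) (B : 'M[R]_(n,p)) :
  castmx (e, erefl) A *m B = castmx (e, erefl) (A *m B).
Proof. by rewrite castmx_mul castmx_id. Qed.

Lemma tensA_mul a b c d e f p (X : 'M[R]_(a,d)) (Y : 'M[R]_(b,e)) (Z : 'M[R]_(c,f))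
  (W : 'M[R]_(d*e*f, p)) :
  (X *t (Y *t Z)) *m castmx (esym (mulnA d e f), erefl) W
  = castmx (esym (mulnA a b c), erefl) (((X *t Y) *t Z) *m W).
Proof.
rewrite tensA castmx_mul castmx_comp castmx_id mulmx_cast castmx_id.
congr (castmx (_, _) _ *m W); exact: eq_irrelevance.
Qed.

Definition swapmx m n : 'M[R]_(m * n, n * m) :=
  \matrix_(i, j) ((mxtens_unindex i == ((mxtens_unindex j).2, (mxtens_unindex j).1))%:R).

Lemma swapmxE m n (i1 : 'I_m) (i2 : 'I_n) j1 j2 :
  swapmx m n (mxtens_index (i1, i2)) (mxtens_index (j1, j2)) = ((i1 == j2) && (i2 == j1))%:R.
Proof. by rewrite mxE !mxtens_indexK. Qed.

Lemma tens_swap a b c d (X : 'M[R]_(a,b)) (Y : 'M[R]_(c,d)) :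
  (X *t Y) *m swapmx b d = swapmx a c *m (Y *t X).
Proof.
apply/matrixP => i j.
case: (mxtens_indexP i) => i1 i2; case: (mxtens_indexP j) => j1 j2.
rewrite !mxE (bigD1 (mxtens_index (j2, j1))) //= big1 ?addr0; last first.
  move=> l; case: (mxtens_indexP l) => l1 l2; rewrite (can_eq (@mxtens_indexK _ _)).
  by move=> /negbTE hl; rewrite swapmxE -xpair_eqE hl mulr0.
rewrite (bigD1 (mxtens_index (i2, i1))) //= big1 ?addr0; last first.
  move=> l; case: (mxtens_indexP l) => l1 l2; rewrite (can_eq (@mxtens_indexK _ _)).
  move=> hl; rewrite swapmxE.
  case: eqP => [e1|]; case: eqP => [e2|] //=; rewrite ?mul0r //.
  by move: hl; rewrite e1 e2 eqxx.
by rewrite !swapmxE !tensmxE !eqxx /= mulr1 mul1r mulrC.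
Qed.

Lemma swapmxK m n : swapmx m n *m swapmx n m = 1%:M.
Proof.
apply/matrixP => i j.
case: (mxtens_indexP i) => i1 i2; case: (mxtens_indexP j) => j1 j2.
rewrite !mxE (bigD1 (mxtens_index (i2, i1))) //= big1 ?addr0; last first.
  move=> l; case: (mxtens_indexP l) => l1 l2; rewrite (can_eq (@mxtens_indexK _ _)).
  move=> hl; rewrite swapmxE.
  case: eqP => [e1|]; case: eqP => [e2|] //=; rewrite ?mul0r //.
  by move: hl; rewrite e1 e2 eqxx.
rewrite !swapmxE !eqxx mul1r (can_eq (@mxtens_indexK _ _)) -xpair_eqE.
by rewrite !xpair_eqE andbC.
Qed.

End Tens.

Section TensF.
Variable F : fieldType.

Lemma swap_free m n : row_free (swapmx F m n).
Proof. by apply/row_freeP; exists (swapmx F n m); exact: swapmxK. Qed.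

Lemma swap_full m n : row_full (swapmx F m n).
Proof. by apply/row_fullP; exists (swapmx F n m); exact: swapmxK. Qed.

Lemma tens_subl a a' b c d (X : 'M[F]_(a,b)) (X' : 'M[F]_(a',b)) (Y : 'M[F]_(c,d)) :
  (X <= X')%MS -> (X *t Y <= X' *t Y)%MS.
Proof.
move=> /submxP [D ->]; apply/submxP; exists (D *t 1%:M).
by rewrite tensmx_mul mul1mx.
Qed.

Lemma tens_subr a b c d c' (X : 'M[F]_(a,b)) (Y : 'M[F]_(c,d)) (Y' : 'M[F]_(c',d)) :
  (Y <= Y')%MS -> (X *t Y <= X *t Y')%MS.
Proof.
move=> /submxP [D ->]; apply/submxP; exists (1%:M *t D).
by rewrite tensmx_mul mul1mx.
Qed.

Lemma swap_hw k m n (rho1 : 'M[F]_k -> 'M_m) (rho2 : 'M[F]_k -> 'M_n)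
  (S1 : 'M[F]_m) (S2 : 'M[F]_n) pi M (B1 : 'M[F]_(M, m * n)) :
  row_free B1 ->
  (forall w, (w <= B1)%MS <-> (w <= S1 *t S2)%MS /\ hwvec (fun g => rho1 g *t rho2 g) pi w) ->
  row_free (B1 *m swapmx F m n) /\
  forall w, (w <= B1 *m swapmx F m n)%MS <->
     (w <= S2 *t S1)%MS /\ hwvec (fun g => rho2 g *t rho1 g) pi w.
Proof.
move=> fB1 hB1; split; first by rewrite /row_free mxrankMfree ?swap_free.
move=> w.
have wE : w = (w *m swapmx F n m) *m swapmx F m n by rewrite -mulmxA swapmxK mulmx1.
set v := w *m swapmx F n m in wE.
have sw : forall g, (rho1 g *t rho2 g) *m swapmx F m n = swapmx F m n *m (rho2 g *t rho1 g).
  by move=> g; exact: tens_swap.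
have hw : forall (g : 'M_k) c, ((v *m swapmx F m n) *m (rho2 g *t rho1 g)
      = c *: (v *m swapmx F m n)) <-> (v *m (rho1 g *t rho2 g) = c *: v).
  move=> g c; rewrite -mulmxA -sw mulmxA scalemxAl; split; last by move=> ->.
  exact: (row_free_inj (swap_free m n)).
rewrite wE submxMfree ?swap_free // hB1.
have -> : (v *m swapmx F m n <= S2 *t S1)%MS = (v <= S1 *t S2)%MS.
  by rewrite -(eqmxMfull (S2 *t S1) (swap_full m n)) -tens_swap submxMfree ?swap_free.
split => -[h1 [h2 h3]]; split => //; split.
- by move=> t ht; apply/hw; exact: h2.
- by move=> u hu1 hu2; rewrite -[RHS]scale1r; apply/hw; rewrite scale1r; exact: h3.
- by move=> t ht; apply/hw; exact: h2.
- by move=> u hu1 hu2; rewrite -[RHS]scale1r; apply/hw; rewrite scale1r; exact: h3.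
Qed.
End TensF.
Arguments tens_subl {F a a' b c d X X' Y}.
Arguments tens_subr {F a b c d c' X Y Y'}.
Section Adj.
Variable C : numClosedFieldType.

Definition adj {a b} (X : 'M[C]_(a,b)) : 'M[C]_(b,a) := (map_mx Num.conj X)^T.

Lemma adjM a b c (X : 'M[C]_(a,b)) (Y : 'M[C]_(b,c)) : adj (X *m Y) = adj Y *m adj X.
Proof. by rewrite /adj map_mxM trmx_mul. Qed.

Lemma adjK a b (X : 'M[C]_(a,b)) : adj (adj X) = X.
Proof. by apply/matrixP => i j; rewrite !mxE conjCK. Qed.

Lemma adj_tens a b c d (X : 'M[C]_(a,b)) (Y : 'M[C]_(c,d)) : adj (X *t Y) = adj X *t adj Y.
Proof. by rewrite /adj map_mxT trmx_tens. Qed.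

Lemma adj1 n : adj (1%:M : 'M[C]_n) = 1%:M.
Proof. by rewrite /adj map_mx1 trmx1. Qed.

Lemma adj_ntens a b (X : 'M[C]_(a,b)) n : adj (X ^t n) = (adj X) ^t n.
Proof.
case: n => [|n]; first by rewrite /ntensmx adj1.
rewrite /ntensmx; elim: n => [|n IH] //=.
by rewrite adj_tens IH.
Qed.

Lemma adj_inv n (g : 'M[C]_n) : adj (invmx g) = invmx (adj g).
Proof. by rewrite /adj map_invmx trmx_inv. Qed.

Lemma adj_unit n (g : 'M[C]_n) : g \in unitmx -> adj g \in unitmx.
Proof. by rewrite /adj unitmx_tr map_unitmx. Qed.

Lemma adj_def0 d (v : 'rV[C]_d) : v *m adj v = 0 -> v = 0.
Proof.
move=> /matrixP /(_ 0 0); rewrite !mxE => h.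
apply/rowP => j; rewrite mxE.
have hge : forall i : 'I_d, true -> 0 <= v 0 i * (v 0 i)^*.
  by move=> i _; exact: mul_conjC_ge0.
have h' : \sum_(i < d) v 0 i * (v 0 i)^* = 0.
  by rewrite -[RHS]h; apply: eq_bigr => i _; rewrite !mxE. 
have := psumr_eq0P hge h' (i:=j) isT.
by move/eqP; rewrite mul_conjC_eq0 => /eqP.
Qed.


Lemma lift k d d' (rho : 'M[C]_k -> 'M_d) (rho' : 'M[C]_k -> 'M_d') r (U : 'M_(r,d))
  (Q : 'M_(d,d')) pi (y : 'rV_d') :
  (forall g, g \in unitmx -> adj (rho g) = rho (adj g)) ->
  Defs.invariant rho U -> equivariant_on rho rho' U Q ->
  (y <= U *m Q)%MS -> hwvec rho' pi y ->
  exists x : 'rV_d, [/\ (x <= U)%MS, hwvec rho pi x & x *m Q = y].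
Proof.
move=> hrho hU hQ yUQ [hy1 hy2].
set K := (U :&: kermx Q)%MS.
have KU : (K <= U)%MS := capmxSl _ _.
have KQ : K *m Q = 0 by apply/eqP; rewrite -sub_kermx capmxSr.
have Kinv : forall g, g \in unitmx -> (K *m rho g <= K)%MS.
  move=> g gu; rewrite sub_capmx; apply/andP; split.
    exact: submx_trans (submxMr _ KU) (hU g gu).
  by rewrite sub_kermx (equivE hQ _ gu _ _ KU) KQ mul0mx.
set Cm := (U :&: kermx (adj K))%MS.
have CU : (Cm <= U)%MS := capmxSl _ _.
have CK : Cm *m adj K = 0 by apply/eqP; rewrite -sub_kermx capmxSr.
have Cinv : forall g, g \in unitmx -> (Cm *m rho g <= Cm)%MS.
  move=> g gu; rewrite sub_capmx; apply/andP; split.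
    exact: submx_trans (submxMr _ CU) (hU g gu).
  have gu' : adj g \in unitmx by apply: adj_unit.
  have /submxP [W hW] := Kinv _ gu'.
  have e : adj (K *m rho (adj g)) = adj (W *m K) by rewrite hW.
  move: e; rewrite !adjM hrho // adjK => e.
  by rewrite sub_kermx -mulmxA e mulmxA CK mul0mx.
have KC0 : (K :&: Cm)%MS = 0.
  apply/row_matrixP => i; rewrite row0.
  set v := row i _.
  have vKC : (v <= K :&: Cm)%MS := row_sub _ _.
  move: vKC; rewrite sub_capmx => /andP [vK vC].
  have hv : v *m adj K = 0 by move/submxP: vC => [E ->]; rewrite -mulmxA CK mulmx0.
  move/submxP: vK => [D hD]; apply: adj_def0.
  by rewrite [X in adj X]hD adjM mulmxA hv mul0mx.
have UKC : (U <= K + Cm)%MS.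
  have sKC : (K + Cm <= U)%MS by rewrite addsmx_sub KU CU.
  rewrite -(geq_leqif (mxrank_leqif_sup sKC)).
  rewrite (mxrank_disjoint_sum KC0).
  have h1 := mxrank_sum_cap U (kermx (adj K)).
  have h2 := mxrank_ker (adj K).
  have h3 : \rank (adj K) = \rank K by rewrite /adj mxrank_tr mxrank_map.
  have h4 := rank_leq_col (U + kermx (adj K))%MS.
  have h5 := rank_leq_col K.
  rewrite -/Cm in h1; lia.
have /submxP [a ha] := yUQ.
have bKC : (a *m U <= K + Cm)%MS := submx_trans (submxMl _ _) UKC.
have /sub_addsmxP [[u1 u2] /= hb] := bKC.
have xC : (u2 *m Cm <= Cm)%MS := submxMl _ _.
have xU : (u2 *m Cm <= U)%MS := submx_trans xC CU.
have xQ : u2 *m Cm *m Q = y.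
  by rewrite ha mulmxA hb mulmxDl -(mulmxA u1) KQ mulmx0 add0r.
have key : forall g, g \in unitmx -> forall c, y *m rho' g = c *: y ->
    u2 *m Cm *m rho g = c *: (u2 *m Cm).
  move=> g gu c hc.
  set z := u2 *m Cm *m rho g - c *: (u2 *m Cm).
  suff : z = 0 by move/eqP; rewrite subr_eq0 => /eqP.
  apply/eqP; rewrite -submx0 -KC0 sub_capmx; apply/andP; split; last first.
    rewrite addmx_sub // ?eqmx_opp ?scalemx_sub //.
    exact: submx_trans (submxMr _ xC) (Cinv g gu).
  rewrite sub_capmx; apply/andP; split.
    rewrite addmx_sub // ?eqmx_opp ?scalemx_sub //.
    exact: submx_trans (submxMr _ xU) (hU g gu).
  rewrite sub_kermx mulmxBl (equivE hQ _ gu _ _ xU) xQ hc -scalemxAl xQ.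
  by rewrite subrr.
exists (u2 *m Cm); split => //; split.
  by move=> t ht; apply: key; [exact: diag_unit | exact: hy1].
move=> u hu1 hu2; rewrite -[RHS]scale1r; apply: key; first exact: unip_unit.
by rewrite scale1r; exact: hy2.
Qed.

End Adj.
Arguments adj {C a b}.
Arguments lift {C k d d' rho rho' r U Q pi y}.
Arguments swap_hw {F k m n rho1 rho2 S1 S2 pi M B1}.
Arguments hw_map {F k d d' rho rho' r U Q pi x}.

Theorem proposition2 (R : realType) (k : nat) (mu nu : seq nat)
  (Hmu : is_partition mu) (Hmuk : (size mu <= k)%N) (Hnuk : (size nu <= k)%N)
  (Hcell : adds_one_cell mu nu)
  (Smu : 'M[R[i]]_(k ^ sumn mu)) (Snu : 'M[R[i]]_(k ^ sumn nu))
  (HSmu : is_Schur_dual Smu) (HSnu : is_Schur_dual Snu)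
  (* iota : S_nu dual(V) -> dual(V) (x) S_mu dual(V), an equivariant inclusion *)
  (iota : 'M[R[i]]_(k ^ sumn nu, k * k ^ sumn mu))
  (Hiota_into : (Snu *m iota <= (1%:M : 'M_k) *t Smu)%MS)
  (Hiota_inj : \rank (Snu *m iota) = \rank Snu)
  (Hiota_eq : equivariant_on (dualrep k (sumn nu))
                (fun g => invmx g *t dualrep k (sumn mu) g) Snu iota)
  (* P : S_mu dual(V) (x) dual(V) -> S_nu dual(V), an equivariant projection *)
  (P : 'M[R[i]]_(k ^ sumn mu * k, k ^ sumn nu))
  (HP_onto : ((Smu *t (1%:M : 'M_k)) *m P == Snu)%MS)
  (HP_eq : equivariant_on (fun g => dualrep k (sumn mu) g *t invmx g)
                (dualrep k (sumn nu)) (Smu *t (1%:M : 'M_k)) P)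
  (pi : 'I_k -> int) (M : nat)
  (H1 : hw_mult (fun g => dualrep k (sumn mu) g *t dualrep k (sumn nu) g)
          (Smu *t Snu) pi M)
  (H2 : hw_mult (fun g => dualrep k (sumn mu) g *t
                          (invmx g *t dualrep k (sumn mu) g))
          (Smu *t ((1%:M : 'M_k) *t Smu)) pi M) :
  let T' : 'M[R[i]]_(k ^ sumn mu * k ^ sumn nu, k ^ sumn nu * k ^ sumn mu) :=
    ((1%:M : 'M_(k ^ sumn mu)) *t iota) *m
    castmx (esym (mulnA (k ^ sumn mu)%N k (k ^ sumn mu)%N), erefl)
      (P *t (1%:M : 'M_(k ^ sumn mu))) in
  hw_mult (fun g => dualrep k (sumn nu) g *t dualrep k (sumn mu) g)
    ((Smu *t Snu) *m T') pi M.
Proof.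
move=> T'.
case: H1 => B1 [fB1 hB1]; case: H2 => B2 [fB2 hB2].
case: HSmu => [[Sinv _ _] _].
have eqP_ := equivE HP_eq.
have eqI := equivE Hiota_eq.
pose J := (1%:M : 'M_(k ^ sumn mu)) *t iota.
pose Q := castmx (esym (mulnA (k ^ sumn mu)%N k (k ^ sumn mu)%N), erefl)
      (P *t (1%:M : 'M_(k ^ sumn mu))).
have -> : T' = J *m Q by [].
have QE : forall a b c (X : 'M_(a, k ^ sumn mu)) (Y : 'M_(b,k)) (Z : 'M_(c, k ^ sumn mu)),
    (X *t (Y *t Z)) *m Q = castmx (esym (mulnA a b c), erefl) (((X *t Y) *m P) *t Z).
  by move=> a b c X Y Z; rewrite /Q tensA_mul tensmx_mul mulmx1.
have hJ : equivariant_on (fun g => dualrep k (sumn mu) g *t dualrep k (sumn nu) g)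
    (fun g => dualrep k (sumn mu) g *t (invmx g *t dualrep k (sumn mu) g)) (Smu *t Snu) J.
  move=> g gu; rewrite mulmxBr !mulmxA /J !tensmx_mul !mulmx1 ?mul1mx.
  by rewrite (eqI g gu _ Snu (submx_refl Snu)) subrr.
have AJB : (Smu *t Snu *m J <= Smu *t (1%:M *t Smu))%MS.
  by rewrite /J tensmx_mul mulmx1; exact: tens_subr Hiota_into.
have [L hL] : exists L, forall p (X : 'M_(p, _)), (X <= Smu *t Snu)%MS -> X *m J *m L = X.
  have cap0 : (Snu :&: kermx iota)%MS = 0.
    have := mxrank_mul_ker Snu iota; rewrite Hiota_inj => h.
    apply/eqP; rewrite -mxrank_eq0; lia.
  set Y := Snu *m iota.
  set L0 := pinvmx Y *m Snu.
  have YL : Snu *m iota *m L0 = Snu.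
    apply/eqP; rewrite -subr_eq0 -submx0 -cap0 sub_capmx; apply/andP; split.
      by rewrite addmx_sub // ?eqmx_opp ?submx_refl // /L0 mulmxA submxMl.
    rewrite sub_kermx mulmxBl.
    have -> : Snu *m iota *m L0 *m iota = Y *m pinvmx Y *m Y by rewrite /L0 /Y !mulmxA.
    by rewrite mulmxKpV ?submx_refl // subrr.
  exists (1%:M *t L0) => p X /submxP [D ->].
  by rewrite -!mulmxA /J !tensmx_mul !mulmx1 mulmxA YL.
set rm := dualrep k (sumn mu).
set rn := dualrep k (sumn nu).
have hQ : equivariant_on (fun g => rm g *t (invmx g *t rm g)) (fun g => rn g *t rm g)
    (Smu *t (1%:M *t Smu)) Q.
  move=> g gu; apply/eqP; rewrite mulmxBr subr_eq0 !mulmxA; apply/eqP.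
  rewrite !tensmx_mul QE QE castmx_mulr tensmx_mul mul1mx.
  by rewrite -(eqP_ g gu _ (Smu *t 1%:M) (submx_refl _)) tensmx_mul mul1mx.
have BQD : (Smu *t (1%:M *t Smu) *m Q == Snu *t Smu)%MS.
  move/andP: HP_onto => [h1 h2].
  by rewrite QE !eqmx_cast !tens_subl.
have Binv : Defs.invariant (fun g => rm g *t (invmx g *t rm g)) (Smu *t (1%:M *t Smu)).
  move=> g gu; rewrite !tensmx_mul mul1mx.
  apply: submx_trans (tens_subl (Sinv g gu)) _.
  apply: tens_subr.
  apply: submx_trans (tens_subl (submx1 _)) _.
  exact: tens_subr (Sinv g gu).
have hrho : forall g, g \in unitmx -> adj (rm g *t (invmx g *t rm g))
    = rm (adj g) *t (invmx (adj g) *t rm (adj g)).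
  by move=> g gu; rewrite !adj_tens /rm /dualrep !adj_ntens !adj_inv.
have [fB3 hB3] := swap_hw fB1 hB1.
move: (B1 *m swapmx _ _ _) fB3 hB3 => B3 fB3 hB3.
have B1A : (B1 <= Smu *t Snu)%MS.
  by apply/row_subP => i; have /hB1 [] := row_sub i B1.
have B1J_B2 : (B1 *m J <= B2)%MS.
  apply/row_subP => i; rewrite row_mul.
  have /hB1 [h1 h2] : (row i B1 <= B1)%MS := row_sub _ _.
  apply/hB2; split; first exact: submx_trans (submxMr _ h1) AJB.
  exact: hw_map h1 h2 hJ.
have rB1J : \rank (B1 *m J) = M.
  have h := mxrankM_maxl (B1 *m J) L; rewrite (hL _ _ B1A) (eqP fB1) in h.
  have h' := rank_leq_row (B1 *m J).
  by apply/eqP; rewrite eqn_leq h h'.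
have B1J_eq : (B1 *m J == B2)%MS.
  by rewrite -(mxrank_leqif_eq B1J_B2).2 rB1J (eqP fB2).
have B3_B2Q : (B3 <= B2 *m Q)%MS.
  apply/row_subP => i.
  have /hB3 [y1 y2] : (row i B3 <= B3)%MS := row_sub _ _.
  have yBQ : (row i B3 <= Smu *t (1%:M *t Smu) *m Q)%MS.
    by move/andP: BQD => [_ h]; exact: submx_trans y1 h.
  have [x [xB xhw xQ]] := lift hrho Binv hQ yBQ y2.
  rewrite -xQ submxMr //; apply/hB2; split => //.
have rB2Q : \rank (B2 *m Q) = M.
  have h := mxrankS B3_B2Q; rewrite (eqP fB3) in h.
  have h' := mxrankM_maxl B2 Q; rewrite (eqP fB2) in h'.
  by apply/eqP; rewrite eqn_leq h h'.
have e3 : (B3 == B2 *m Q)%MS.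
  by rewrite -(mxrank_leqif_eq B3_B2Q).2 rB2Q (eqP fB3).
have eX : (B1 *m (J *m Q) == B3)%MS.
  rewrite mulmxA; apply/andP; split.
    move/andP: e3 => [_ h]; apply: submx_trans h.
    by move/andP: B1J_eq => [h1 _]; exact: submxMr.
  move/andP: e3 => [h _]; apply: submx_trans h _.
  by move/andP: B1J_eq => [_ h2]; exact: submxMr.
exists (B1 *m (J *m Q)); split.
  by rewrite /row_free (eqmx_rank eX) (eqP fB3).
move/andP: eX => [eX1 eX2].
move=> w; split.
  move=> wX; have /hB3 [h1 h2] := submx_trans wX eX1; split => //.
  exact: submx_trans wX (submxMr _ B1A).
move=> [wA whw]; apply: submx_trans eX2; apply/hB3; split => //.
apply: submx_trans wA _; rewrite mulmxA.
move/andP: BQD => [h _]; exact: submx_trans (submxMr _ AJB) h.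
Qed.
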